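(* Let $\tau\ge1$ and consider two candidates $P,Q$. Weighted Majority Rule 1 (defined in the context) has distortion at most $\max\big\{\frac{\tau+2}{\tau},\frac{3\tau-1}{\tau+1}\big\}$; i.e., for every instance, if it selects $P$ then $SC(P)\le\max\{\frac{\tau+2}{\tau},\frac{3\tau-1}{\tau+1}\}\,SC(Q)$.
   Context: Voters $N=\{1,\dots,n\}$ and candidates are points of an arbitrary metric space $(X,d)$. Voter $i$ prefers $P$ to $Q$ only if $d(i,P)\le d(i,Q)$, with preference strength $\alpha_i^{PQ}=d(i,Q)/d(i,P)\ge1$. $SC(Y)=\sum_{i\in N}d(i,Y)$. For two candidates $P,Q$ and a threshold $\tau$, the information available is every voter's preferred candidate and whether that voter's preference strength is $>\tau$ (strong) or $\le\tau$ (weak). Let $A_2$ ($A_1$) be the voters preferring $P$ with strength $>\tau$ ($\le\tau$), and $B_2$ ($B_1$) the voters preferring $Q$ with strength $>\tau$ ($\le\tau$). Weighted Majority Rule 1: if $\tau\ge\sqrt2+1$, give weight $\frac{\tau+1}{\tau-1}$ to each strong voter and weight $1$ to each weak voter; if $\tau<\sqrt2+1$, give weight $\tau$ to each strong voter and weight $1$ to each weak voter. Select $P$ if the total weight of voters preferring $P$ is at least that of voters preferring $Q$ (i.e. $w|A_2|+|A_1|\ge |B_1|+w|B_2|$ for the appropriate strong weight $w$), and $Q$ otherwise (ties may be broken arbitrarily). *)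

(* Defs.v *)
From Stdlib Require Import Reals Lra List Bool.
Import ListNotations.
Local Open Scope bool_scope.
Open Scope R_scope.

Record metric_space := MetricSpace {
  mpt :> Type;
  mdist : mpt -> mpt -> R;
  dist_nonneg : forall x y, 0 <= mdist x y;
  dist_self : forall x, mdist x x = 0;
  dist_sep : forall x y, mdist x y = 0 -> x = y;
  dist_sym : forall x y, mdist x y = mdist y x;
  dist_tri : forall x y z, mdist x z <= mdist x y + mdist y z
}.

Definition sumR (n : nat) (f : nat -> R) : R :=
  fold_right Rplus 0 (map f (seq 0 n)).

Definition countV (n : nat) (p : nat -> bool) : R :=
  INR (length (filter p (seq 0 n))).

Definition SC (M : metric_space) (n : nat) (voter : nat -> M) (Y : M) : R :=
  sumR n (fun i => mdist M (voter i) Y).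

(* A voter at distance dnear from its preferred candidate and dfar from the
   other has preference strength alpha = dfar / dnear; it is "strong" iff
   alpha > tau.  Written multiplicatively (tau * dnear < dfar) so that
   dnear = 0 < dfar counts as alpha = +infinity (strong), and the degenerate
   0/0 case (dnear = dfar = 0) counts as alpha = 1 (weak, as tau >= 1). *)
Definition strongb (tau dnear dfar : R) : bool :=
  if Rlt_dec (tau * dnear) dfar then true else false.

(* prefP i = true : voter i prefers P; false : voter i prefers Q. *)
Definition A2 (M : metric_space) (n : nat) (voter : nat -> M) (P Q : M)
  (prefP : nat -> bool) (tau : R) : R :=
  countV n (fun i => prefP i && strongb tau (mdist M (voter i) P) (mdist M (voter i) Q)).
Definition A1 (M : metric_space) (n : nat) (voter : nat -> M) (P Q : M)
  (prefP : nat -> bool) (tau : R) : R :=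
  countV n (fun i => prefP i && negb (strongb tau (mdist M (voter i) P) (mdist M (voter i) Q))).
Definition B2 (M : metric_space) (n : nat) (voter : nat -> M) (P Q : M)
  (prefP : nat -> bool) (tau : R) : R :=
  countV n (fun i => negb (prefP i) && strongb tau (mdist M (voter i) Q) (mdist M (voter i) P)).
Definition B1 (M : metric_space) (n : nat) (voter : nat -> M) (P Q : M)
  (prefP : nat -> bool) (tau : R) : R :=
  countV n (fun i => negb (prefP i) && negb (strongb tau (mdist M (voter i) Q) (mdist M (voter i) P))).

Definition wmr1_weight (tau : R) : R :=
  if Rle_dec (sqrt 2 + 1) tau then (tau + 1) / (tau - 1) else tau.

Definition wmr1_selects_P (M : metric_space) (n : nat) (voter : nat -> M)
  (P Q : M) (prefP : nat -> bool) (tau : R) : Prop :=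
  wmr1_weight tau * A2 M n voter P Q prefP tau + A1 M n voter P Q prefP tau
  >= B1 M n voter P Q prefP tau + wmr1_weight tau * B2 M n voter P Q prefP tau.

(* Main.v *)
Require Import Defs.
From Stdlib Require Import Reals Lra Psatz List Bool Lia FunctionalExtensionality.
Import ListNotations.
Open Scope R_scope.

Definition ind (b : bool) : R := if b then 1 else 0.

Lemma voter_bound (tau k lam p q D : R) (b : bool) :
  1 <= tau -> 1 <= k -> 0 <= lam -> lam <= (k-1)/2 -> tau+1 <= k*tau - 1 ->
  (tau <= k \/ tau - k <= lam*(tau-1)) -> 0 <= p -> 0 <= q -> 0 <= D ->
  D <= p+q -> p <= q+D -> q <= p + D ->
  (if b then p <= q else q <= p) ->
  p - k*q <= D * ( - ind (b && strongb tau p q) - lam*ind (b && negb (strongb tau p q))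
     + lam * ind (negb b && negb (strongb tau q p)) + ind (negb b && strongb tau q p)).
Proof.
  intros Ht Hk Hl Hl2 HA2 HB1 Hp Hq HD T1 T2 T3 Hb.
  unfold strongb; destruct b; simpl.
  - destruct (Rlt_dec (tau*p) q) as [h|h]; simpl; unfold ind.
    + assert (H: (tau+1)*(D + p - k*q) <= (k+1)*(tau*p - q)).
      { assert (0 <= (k*tau-1-(tau+1))*D) by (apply Rmult_le_pos; lra).
        assert (0 <= (k*tau-1)*(p+q-D)) by (apply Rmult_le_pos; nra).
        nra. }
      assert ((k+1)*(tau*p-q) < 0) by nra.
      nra.
    + assert (0 <= (k+1)*(q-p)) by nra.
      assert ((k-1)*D <= (k-1)*(p+q)) by nra.
      nra.
  - destruct (Rlt_dec (tau*q) p) as [h|h]; simpl; unfold ind.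
    + nra.
    + destruct HB1 as [h1|h1].
      * assert (p <= tau * q) by lra.
        assert (tau*q <= k*q) by nra. nra.
      * destruct (Rle_lt_dec tau k) as [h2|h2].
        { assert (p <= tau * q) by lra. assert (tau*q <= k*q) by nra. nra. }
        assert (E: (tau-1)*(p - k*q) <= (tau-1)*(lam*D)).
        { assert (0 <= (k-1)*(tau*q-p)) by nra.
          assert (0 <= (tau-k)*(q+D-p)) by nra.
          assert ((tau-k)*D <= lam*(tau-1)*D) by nra.
          nra. }
        apply Rmult_le_reg_l in E; lra.
Qed.

Definition lsum (l : list nat) (f : nat -> R) := fold_right Rplus 0 (map f l).

Lemma lsum_le l f g : (forall i, In i l -> f i <= g i) -> lsum l f <= lsum l g.
Proof. induction l; simpl; intros H; unfold lsum in *; simpl; [lra|].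
  assert (f a <= g a) by auto. assert (fold_right Rplus 0 (map f l) <= fold_right Rplus 0 (map g l)) by (apply IHl; auto). lra. Qed.

Lemma lsum_plus l f g : lsum l (fun i => f i + g i) = lsum l f + lsum l g.
Proof. induction l; unfold lsum in *; simpl; [lra|]. rewrite IHl. lra. Qed.

Lemma lsum_scal l c f : lsum l (fun i => c * f i) = c * lsum l f.
Proof. induction l; unfold lsum in *; simpl; [lra|]. rewrite IHl. lra. Qed.

Lemma lsum_ind l p : lsum l (fun i => ind (p i)) = INR (length (filter p l)).
Proof. induction l; unfold lsum in *; cbn [map fold_right filter length]; [simpl; lra|]. rewrite IHl.
  unfold ind; destruct (p a); cbn [length]; [rewrite S_INR|]; lra. Qed.

Lemma lsum_nonneg l f : (forall i, 0 <= f i) -> 0 <= lsum l f.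
Proof. induction l; unfold lsum in *; simpl; intros; [lra|]. specialize (IHl H). specialize (H a). lra. Qed.

Lemma lsum_comb l D lam (fa fb fc fd : nat -> R) :
  lsum l (fun i => D * (- fa i - lam * fb i + lam * fc i + fd i)) =
  D * (- lsum l fa - lam * lsum l fb + lam * lsum l fc + lsum l fd).
Proof. induction l; unfold lsum in *; simpl; [ring|]. rewrite IHl. ring. Qed.

Lemma lsum_comb2 l k (f g : nat -> R) :
  lsum l (fun i => f i - k * g i) = lsum l f - k * lsum l g.
Proof. induction l; unfold lsum in *; simpl; [ring|]. rewrite IHl. ring. Qed.

Theorem mainTheorem3 (M : metric_space) (n : nat) (voter : nat -> M)
  (P Q : M) (prefP : nat -> bool) (tau : R)
  (Htau : 1 <= tau)
  (Hpref : forall i, (i < n)%nat ->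
     if prefP i then mdist M (voter i) P <= mdist M (voter i) Q
     else mdist M (voter i) Q <= mdist M (voter i) P)
  (Hsel : wmr1_selects_P M n voter P Q prefP tau) :
  SC M n voter P <= Rmax ((tau + 2) / tau) ((3 * tau - 1) / (tau + 1)) * SC M n voter Q.
Proof.
  set (D := mdist M P Q).
  assert (HD : 0 <= D) by apply Defs.dist_nonneg.
  set (p := fun i => mdist M (voter i) P).
  set (q := fun i => mdist M (voter i) Q).
  set (a2 := Defs.A2 M n voter P Q prefP tau).
  set (a1 := Defs.A1 M n voter P Q prefP tau).
  set (b1 := Defs.B1 M n voter P Q prefP tau).
  set (b2 := Defs.B2 M n voter P Q prefP tau).
  assert (key : forall k lam, 1 <= k -> 0 <= lam -> lam <= (k-1)/2 -> tau+1 <= k*tau - 1 ->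
    (tau <= k \/ tau - k <= lam*(tau-1)) -> a2 + lam*a1 >= lam*b1 + b2 ->
    SC M n voter P <= k * SC M n voter Q).
  { intros k lam Hk Hl Hl2 HA2 HB1 Hs.
    assert (S: lsum (seq 0 n) (fun i => p i - k * q i) <=
      lsum (seq 0 n) (fun i => D * ( - ind (prefP i && strongb tau (p i) (q i))
        - lam*ind (prefP i && negb (strongb tau (p i) (q i)))
        + lam * ind (negb (prefP i) && negb (strongb tau (q i) (p i)))
        + ind (negb (prefP i) && strongb tau (q i) (p i))))).
    { apply lsum_le; intros i Hi. apply in_seq in Hi.
      assert (h1 := Defs.dist_nonneg M (voter i) P).
      assert (h2 := Defs.dist_nonneg M (voter i) Q).
      assert (h3 := Defs.dist_tri M P (voter i) Q). rewrite (Defs.dist_sym M P (voter i)) in h3.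
      assert (h4 := Defs.dist_tri M (voter i) Q P). rewrite (Defs.dist_sym M Q P) in h4.
      assert (h5 := Defs.dist_tri M (voter i) P Q).
      assert (h6 := Hpref i ltac:(lia)).
      apply voter_bound; auto. }
    rewrite lsum_comb2 in S.
    rewrite (lsum_comb _ D lam (fun i => ind (prefP i && strongb tau (p i) (q i)))
       (fun i => ind (prefP i && negb (strongb tau (p i) (q i))))
       (fun i => ind (negb (prefP i) && negb (strongb tau (q i) (p i))))
       (fun i => ind (negb (prefP i) && strongb tau (q i) (p i)))) in S.
    rewrite !lsum_ind in S.
    change (lsum (seq 0 n) p - k * lsum (seq 0 n) q <= D * (- a2 - lam * a1 + lam * b1 + b2)) in S.
    change (lsum (seq 0 n) p <= k * lsum (seq 0 n) q).
    assert (0 <= D * (a2 + lam * a1 - (lam * b1 + b2))) by (apply Rmult_le_pos; lra).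
    nra. }
  assert (HSQ : 0 <= SC M n voter Q).
  { unfold SC, sumR. apply (lsum_nonneg (seq 0 n) (fun i => mdist M (voter i) Q)).
    intros; apply Defs.dist_nonneg. }
  assert (s2 := sqrt_lt_R0 2 ltac:(lra)). assert (s2s := sqrt_sqrt 2 ltac:(lra)).
  unfold wmr1_selects_P, wmr1_weight in Hsel. fold a1 a2 b1 b2 in Hsel.
  destruct (Rle_dec (sqrt 2 + 1) tau) as [ht|ht].
  - set (k := (3 * tau - 1) / (tau + 1)).
    set (lam := (tau - 1) / (tau + 1)).
    assert (Hk : k * (tau + 1) = 3*tau - 1) by (unfold k; field; lra).
    assert (Hl : lam * (tau + 1) = tau - 1) by (unfold lam; field; lra).
    assert (Hw : (tau + 1) / (tau - 1) * (tau - 1) = tau + 1). { field. apply Rgt_not_eq. lra. }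
    assert (tt: tau*tau - 2*tau - 1 >= 0) by nra.
    assert (t1 : tau - 1 > 0) by lra.
    assert (E1 : k = 1 + 2 * lam) by (unfold k, lam; field; apply Rgt_not_eq; lra).
    assert (E2 : (k*tau - tau - 2) * (tau+1) = 2*(tau*tau-2*tau-1))
      by (unfold k; field; apply Rgt_not_eq; lra).
    assert (E3 : tau - k = lam * (tau - 1)) by (unfold k, lam; field; apply Rgt_not_eq; lra).
    assert (lw : lam * ((tau + 1) / (tau - 1)) = 1)
      by (unfold lam; field; split; apply Rgt_not_eq; lra).
    assert (lp : 0 < lam) by (unfold lam; apply Rdiv_lt_0_compat; lra).
    clearbody k lam.
    eapply Rle_trans.
    + apply (key k lam).
      * lra.
      * lra.
      * lra.
      * nra.
      * right. lra.
      * set (w := (tau + 1) / (tau - 1)) in *.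
        assert (E: lam * (w * a2 + a1) >= lam * (b1 + w * b2)).
        { apply Rmult_ge_compat_l; [lra|exact Hsel]. }
        replace (lam * (w * a2 + a1)) with (a2 + lam*a1) in E
          by (rewrite Rmult_plus_distr_l, <- Rmult_assoc, lw; ring).
        replace (lam * (b1 + w * b2)) with (lam * b1 + b2) in E
          by (rewrite Rmult_plus_distr_l, <- (Rmult_assoc lam w), lw; ring).
        exact E.
    + apply Rmult_le_compat_r; [exact HSQ| apply Rmax_r].
  - set (k := (tau + 2) / tau).
    set (lam := / tau).
    assert (t0 : tau > 0) by lra.
    assert (tt: tau*tau - 2*tau - 1 < 0).
    { assert (tau - 1 < sqrt 2) by lra. nra. }
    assert (E1 : k = 1 + 2 * lam) by (unfold k, lam; field; apply Rgt_not_eq; lra).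
    assert (E2 : k * tau = tau + 2) by (unfold k; field; apply Rgt_not_eq; lra).
    assert (lw : lam * tau = 1) by (unfold lam; field; apply Rgt_not_eq; lra).
    assert (lp : 0 < lam) by (unfold lam; apply Rinv_0_lt_compat; lra).
    clearbody k lam.
    eapply Rle_trans.
    + apply (key k lam).
      * lra.
      * lra.
      * lra.
      * lra.
      * destruct (Rle_lt_dec tau k) as [h|h]; [left; exact h| right].
        (* (tau - k) * tau <= lam*tau*(tau-1) = tau - 1 *)
        assert (Q1 : (tau - k) * tau = tau*tau - tau - 2) by nra.
        assert ((lam * (tau - 1) - (tau - k)) * tau >= 0) by nra.
        nra.
      * assert (E: lam * (tau * a2 + a1) >= lam * (b1 + tau * b2)).
        { apply Rmult_ge_compat_l; [lra|exact Hsel]. }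
        replace (lam * (tau * a2 + a1)) with (a2 + lam*a1) in E
          by (rewrite Rmult_plus_distr_l, <- Rmult_assoc, lw; ring).
        replace (lam * (b1 + tau * b2)) with (lam * b1 + b2) in E
          by (rewrite Rmult_plus_distr_l, <- (Rmult_assoc lam tau), lw; ring).
        exact E.
    + apply Rmult_le_compat_r; [exact HSQ| apply Rmax_l].
Qed.
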